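(* A tetrahedron $\mathcal T$ has an obtuse cycle if and only if there exists $O\in\operatorname{int}\mathcal T$ such that $(\mathcal T,O)$ is mono-unstable.
   Context: An obtuse cycle of a tetrahedron is a labelling $A,B,C,D$ of its four vertices (giving the edge cycle $A-B-C-D-A$) such that the face angles $\angle ABC$, $\angle BCD$ and $\angle CDA$ are all obtuse. For $O\in\operatorname{int}\mathcal T$, $(\mathcal T,O)$ is in (unstable) equilibrium on a vertex $V$ if the plane perpendicular to $[O,V]$ at $V$ supports $\mathcal T$; $(\mathcal T,O)$ is mono-unstable if exactly one vertex carries such an equilibrium. *)

(* Defs.v *)
From HB Require Import structures.
From mathcomp Require Import all_boot all_order all_algebra all_fingroup.
From mathcomp Require Import all_classical all_reals all_analysis.
Set Implicit Arguments. Unset Strict Implicit. Unset Printing Implicit Defensive.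
Import Order.TTheory GRing.Theory Num.Theory.
Import numFieldNormedType.Exports.
Local Open Scope classical_set_scope.
Local Open Scope ring_scope.

Section Tetra.
Variable R : realType.
Notation pt := 'rV[R]_3.

Definition dotp (u v : pt) : R := \sum_(i < 3) u 0 i * v 0 i.

Definition nondeg_tetra (P : 'I_4 -> pt) : Prop :=
  \det (\matrix_(i < 3) (P (lift ord0 i) - P ord0)) != 0.

Definition tetra (P : 'I_4 -> pt) : set pt :=
  [set X | exists w : 'I_4 -> R, (forall i, 0 <= w i) /\ \sum_(i < 4) w i = 1
                                 /\ X = \sum_(i < 4) w i *: P i].

Definition obtuse_angle (A B C : pt) : Prop := dotp (A - B) (C - B) < 0.

Definition has_obtuse_cycle (P : 'I_4 -> pt) : Prop :=
  exists s : 'S_4,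
    let A := P (s 0) in let B := P (s 1) in
    let C := P (s 2) in let D := P (s 3) in
    [/\ obtuse_angle A B C, obtuse_angle B C D & obtuse_angle C D A].

Definition perp_plane_supports (T : set pt) (O V : pt) : Prop :=
  (forall X, T X -> dotp (X - V) (V - O) <= 0) \/
  (forall X, T X -> 0 <= dotp (X - V) (V - O)).

Definition equilibrium_on (P : 'I_4 -> pt) (O : pt) (i : 'I_4) : Prop :=
  perp_plane_supports (tetra P) O (P i).

Definition mono_unstable (P : 'I_4 -> pt) (O : pt) : Prop :=
  exists i, equilibrium_on P O i /\ forall j, equilibrium_on P O j -> j = i.

End Tetra.

(* Main.v *)
Require Import Defs.
From HB Require Import structures.
From mathcomp Require Import all_boot all_order all_algebra all_fingroup.
From mathcomp Require Import all_classical all_reals all_analysis.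
From mathcomp Require Import ring lra.
Import Order.TTheory GRing.Theory Num.Theory.
Import numFieldNormedType.Exports.
Local Open Scope classical_set_scope.
Local Open Scope ring_scope.
Lemma mulr_ge0_sq {R : realType} (x : R) : 0 <= x * x.
Proof. by rewrite -expr2 sqr_ge0. Qed.

Section Aux.
Variable R : realType.
Local Notation pt := 'rV[R]_3.

Lemma dotpC (u v : pt) : dotp u v = dotp v u.
Proof. by apply: eq_bigr => i _; rewrite mulrC. Qed.
Lemma dotpDl (u v w : pt) : dotp (u + v) w = dotp u w + dotp v w.
Proof. rewrite /dotp -big_split; apply: eq_bigr => i _; by rewrite mxE mulrDl. Qed.
Lemma dotpNl (u w : pt) : dotp (- u) w = - dotp u w.
Proof. rewrite /dotp -sumrN; apply: eq_bigr => i _; by rewrite mxE mulNr. Qed.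
Lemma dotpBl (u v w : pt) : dotp (u - v) w = dotp u w - dotp v w.
Proof. by rewrite dotpDl dotpNl. Qed.
Lemma dotpZl a (u w : pt) : dotp (a *: u) w = a * dotp u w.
Proof. rewrite /dotp mulr_sumr; apply: eq_bigr => i _; by rewrite mxE mulrA. Qed.
Lemma dotp0l (w : pt) : dotp 0 w = 0.
Proof. by rewrite /dotp big1 // => i _; rewrite mxE mul0r. Qed.
Lemma dotp0r (w : pt) : dotp w 0 = 0.
Proof. by rewrite dotpC dotp0l. Qed.
Lemma dotpDr (u v w : pt) : dotp w (u + v) = dotp w u + dotp w v.
Proof. by rewrite !(dotpC w) dotpDl. Qed.
Lemma dotpBr (u v w : pt) : dotp w (u - v) = dotp w u - dotp w v.
Proof. by rewrite !(dotpC w) dotpBl. Qed.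
Lemma dotp_suml (F : 'I_4 -> pt) w : dotp (\sum_k F k) w = \sum_k dotp (F k) w.
Proof. exact: (big_morph (fun u => dotp u w) (fun u v => dotpDl u v w) (dotp0l w)). Qed.
Lemma dotp_ge0 (u : pt) : 0 <= dotp u u.
Proof. by apply: sumr_ge0 => i _; rewrite -expr2 sqr_ge0. Qed.
Lemma dotp_eq0 (u : pt) : dotp u u = 0 -> u = 0.
Proof.
move=> h.
have H := psumr_eq0P (P := xpredT) (F := fun i : 'I_3 => u 0 i * u 0 i)
  (fun i _ => mulr_ge0_sq (u 0 i)) h.
apply/rowP => i; rewrite mxE.
by have /eqP := H i isT; rewrite mulf_eq0 orbb => /eqP.
Qed.
Lemma dotp_amgm (u v : pt) : 2 * dotp u v <= dotp u u + dotp v v.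
Proof.
have := dotp_ge0 (u - v).
rewrite !dotpBl !dotpBr (dotpC v u); lra.
Qed.

Variable P : 'I_4 -> pt.

Lemma tetra_vertex k : tetra P (P k).
Proof.
exists (fun i => (i == k)%:R); split; first by move=> i; rewrite ler0n.
split; first by rewrite (bigD1 k) //= eqxx big1 ?addr0 // => i /negbTE ->.
by rewrite (bigD1 k) //= eqxx scale1r big1 ?addr0 // => i /negbTE ->; rewrite scale0r.
Qed.

Lemma affine_dot (w : 'I_4 -> R) V u :
  \sum_(i < 4) w i = 1 ->
  dotp (\sum_(i < 4) w i *: P i - V) u = \sum_(i < 4) w i * dotp (P i - V) u.
Proof.
move=> w1.
have -> : \sum_(i < 4) w i *: P i - V = \sum_(i < 4) w i *: (P i - V).
  rewrite -{1}[V]scale1r -w1 scaler_suml -sumrB.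
  by apply: eq_bigr => i _; rewrite scalerBr.
rewrite dotp_suml; apply: eq_bigr => i _; by rewrite dotpZl.
Qed.

Lemma eq_of_vert {O j} :
  (forall k, dotp (P k - P j) (P j - O) <= 0) -> equilibrium_on P O j.
Proof.
move=> h; left => X [w [w0 [w1 ->]]].
rewrite affine_dot //; apply: sumr_le0 => i _.
by rewrite mulr_ge0_le0.
Qed.

Lemma noneq_vert {O j} : ~ equilibrium_on P O j ->
  exists k, 0 < dotp (P k - P j) (P j - O).
Proof.
move=> h; apply: contrapT => h2; apply: h; apply: eq_of_vert => k.
rewrite leNgt; apply/negP => hk; apply: h2; by exists k.
Qed.

Lemma vert_of_eq {O j} : tetra P O -> equilibrium_on P O j ->
  forall k, dotp (P k - P j) (P j - O) <= 0.
Proof.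
move=> hO [h|h] k; first exact: h (tetra_vertex k).
have := h _ hO.
have -> : O - P j = - (P j - O) by rewrite opprB.
rewrite dotpNl oppr_ge0 => h2.
have h3 : dotp (P j - O) (P j - O) = 0 by apply/eqP; rewrite eq_le h2 dotp_ge0.
by rewrite (dotp_eq0 _ h3) dotp0r.
Qed.

Lemma noneq_of {O j k} : tetra P O -> 0 < dotp (P k - P j) (P j - O) ->
  ~ equilibrium_on P O j.
Proof.
move=> hO hk he; have := vert_of_eq hO he k; rewrite leNgt hk //.
Qed.

End Aux.
Section Inter.
Variable R : realType.
Local Notation pt := 'rV[R]_3.
Variable P : 'I_4 -> pt.

Lemma ball_norm_pt (x y : pt) e : `|x - y| < e -> ball x e y.
Proof. by rewrite -ball_normE. Qed.

Lemma norm_ball_pt (x y : pt) e : ball x e y -> `|x - y| < e.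
Proof. by rewrite -ball_normE. Qed.

Lemma interior_pos O : interior (tetra P) O ->
  exists w : 'I_4 -> R, (forall i, 0 < w i) /\ \sum_(i < 4) w i = 1
                       /\ O = \sum_(i < 4) w i *: P i.
Proof.
move=> /nbhs_ballP [e e0 he].
pose c : pt := \sum_(i < 4) 4^-1 *: P i.
pose d := O - c.
pose t := e / (2 * (`|d| + 1)).
have nd : 0 <= `|d| by [].
have t0 : 0 < t by apply: divr_gt0 => //; apply: mulr_gt0 => //; lra.
have hQ : tetra P (O + t *: d).
  apply: he; apply: ball_norm_pt.
  rewrite opprD addrA subrr sub0r normrN normrZ gtr0_norm //.
  have ht : t * (2 * (`|d| + 1)) = e by rewrite /t divfK //; apply: lt0r_neq0; lra.
  nra.
case: hQ => v [v0 [v1 hv]].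
exists (fun i => (1 + t)^-1 * (v i + t * 4^-1)); split.
  move=> i; apply: mulr_gt0; first by rewrite invr_gt0; lra.
  by apply: ltr_pwDr => //; apply: mulr_gt0 => //; rewrite invr_gt0.
split.
  rewrite -mulr_sumr big_split /= v1 -mulr_sumr big_const_ord /=.
  have h4 : (4^-1 + (4^-1 + (4^-1 + (4^-1 + 0))) : R) = 1 by field.
  by rewrite h4 mulr1 mulVf //; apply: lt0r_neq0; lra.
have e1 : \sum_(i < 4) ((1 + t)^-1 * (v i + t * 4^-1)) *: P i
   = (1 + t)^-1 *: (\sum_(i < 4) v i *: P i + t *: c).
  rewrite /c scaler_sumr -big_split scaler_sumr; apply: eq_bigr => i _.
  by rewrite -scalerA scalerDl scalerA.
have e2 : O + t *: d + t *: c = (1 + t) *: O.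
  by rewrite /d scalerBr -addrA subrK scalerDl scale1r.
rewrite e1 -hv e2 scalerA mulVf ?scale1r //; apply: lt0r_neq0; lra.
Qed.
End Inter.
Section Inter2.
Variable R : realType.
Local Notation pt := 'rV[R]_3.
Variable P : 'I_4 -> pt.

Lemma entry_le_norm (u : pt) k : `|u 0 k| <= `|u|.
Proof.
have -> : `|u| = mx_norm u by [].
rewrite mx_normrE.
exact: (le_bigmax _ (fun ij : 'I_1 * 'I_3 => `|u ij.1 ij.2|) (0, k)).
Qed.

Lemma pos_interior (w : 'I_4 -> R) : nondeg_tetra P ->
  (forall i, 0 < w i) -> \sum_(i < 4) w i = 1 ->
  interior (tetra P) (\sum_(i < 4) w i *: P i).
Proof.
move=> nd w0 w1.
set O := \sum_(i < 4) w i *: P i.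
pose M : 'M[R]_3 := \matrix_(i < 3) (P (lift ord0 i) - P ord0).
have uM : M \in unitmx by rewrite unitmxE unitfE.
pose N := invmx M.
have [i0 _ hi0] := @arg_minP _ R _ (ord0 : 'I_4) xpredT w isT.
set mu := w _ in hi0.
have mu0 : 0 < mu by apply: w0.
pose S := \sum_(k < 3) \sum_(j < 3) `|N k j|.
have S0 : 0 <= S by apply: sumr_ge0 => k _; apply: sumr_ge0 => j _.
pose e := mu / (4 * (S + 1)).
have e0 : 0 < e by apply: divr_gt0 => //; lra.
have eS : e * S < mu / 4.
  have he : e * (4 * (S + 1)) = mu by rewrite /e divfK //; apply: lt0r_neq0; lra.
  nra.
pose v (Y : pt) : pt := (Y - P ord0) *m N.
have vK Y : Y = P ord0 + \sum_(j < 3) v Y 0 j *: (P (lift ord0 j) - P ord0).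
  have : v Y *m M = Y - P ord0 by rewrite /v mulmxKV.
  rewrite mulmx_sum_row => h.
  rewrite (eq_bigr (fun j => v Y 0 j *: row j M)); last by move=> j _; rewrite rowK.
  by rewrite h addrC subrK.
have vO j : v O 0 j = w (lift ord0 j).
  have hO : O - P ord0 = (\row_j w (lift ord0 j)) *m M.
    rewrite mulmx_sum_row /O.
    have -> : \sum_(i < 4) w i *: P i - P ord0 = \sum_(i < 4) w i *: (P i - P ord0).
      rewrite -{1}[P ord0]scale1r -w1 scaler_suml -sumrB.
      by apply: eq_bigr => i _; rewrite scalerBr.
    rewrite big_ord_recl subrr scaler0 add0r.
    by apply: eq_bigr => l _; rewrite rowK mxE.
  by rewrite /v hO mulmxK // mxE.
apply/nbhs_ballP; exists e => // Y /norm_ball_pt hY.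
have dv j : `|v Y 0 j - w (lift ord0 j)| <= e * S.
  have e3 : (Y - O) *m N = v Y - v O by rewrite /v -mulmxBl opprB addrA subrK.
  rewrite -vO; have -> : v Y 0 j - v O 0 j = (v Y - v O) 0 j by rewrite !mxE.
  rewrite -e3 mxE.
  apply: (le_trans (ler_norm_sum _ _ _)).
  apply: (@le_trans _ _ (\sum_(k < 3) e * `|N k j|)).
    apply: ler_sum => k _; rewrite normrM ler_wpM2r //.
    by apply: ltW; apply: le_lt_trans (entry_le_norm _ _) _; rewrite distrC.
  rewrite -mulr_sumr; apply: ler_wpM2l; first exact: ltW.
  rewrite /S.
  apply: ler_sum => k _.
  by rewrite (bigD1 j) //= lerDl sumr_ge0.
pose wY (k : 'I_4) := if unlift ord0 k is Some j then v Y 0 j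
                      else 1 - \sum_(j < 3) v Y 0 j.
have wY0 : wY ord0 = 1 - \sum_(j < 3) v Y 0 j by rewrite /wY unlift_none.
have wYl j : wY (lift ord0 j) = v Y 0 j by rewrite /wY liftK.
exists wY; split.
  move=> k; rewrite /wY; case: unliftP => [j _|_].
    have := dv j; rewrite ler_norml => /andP [h1 h2].
    have := w0 (lift ord0 j); have := hi0 (lift ord0 j) isT.
    lra.
  have hs : \sum_(j < 3) w (lift ord0 j) = 1 - w ord0 by rewrite -w1 [in RHS]big_ord_recl; lra.
  have := hi0 ord0 isT.
  have hsum : \sum_(j < 3) v Y 0 j <= \sum_(j < 3) w (lift ord0 j) + (e * S) *+ 3.
    apply: (@le_trans _ _ (\sum_(j < 3) (w (lift ord0 j) + e * S))).
      apply: ler_sum => j _; have := dv j; rewrite ler_norml => /andP[_ h]; lra.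
    by rewrite big_split /= sumr_const card_ord.
  move=> h; lra.
split.
  by rewrite big_ord_recl wY0 (eq_bigr _ (fun j _ => wYl j)) subrK.
rewrite big_ord_recl wY0 (eq_bigr _ (fun j _ => congr1 (fun a => a *: P (lift ord0 j)) (wYl j))).
rewrite {1}(vK Y) scalerBl scale1r -addrA; congr (_ + _).
rewrite scaler_suml -sumrN -big_split /=; apply: eq_bigr => j _.
by rewrite scalerBr addrC.
Qed.
End Inter2.
Lemma cover4 (x y z i k : 'I_4) : x != y -> x != z -> x != i -> y != z -> y != i -> z != i ->
  [|| k == x, k == y, k == z | k == i].
Proof.
by case: x => [[|[|[|[|//]]]] ?]; case: y => [[|[|[|[|//]]]] ?]; case: z => [[|[|[|[|//]]]] ?];
  case: i => [[|[|[|[|//]]]] ?]; case: k => [[|[|[|[|//]]]] ?].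
Qed.

Lemma sum4 {V : nmodType} (F : 'I_4 -> V) (x y z i : 'I_4) :
  x != y -> x != z -> x != i -> y != z -> y != i -> z != i ->
  \sum_k F k = F x + F y + F z + F i.
Proof.
move=> h1 h2 h3 h4 h5 h6.
rewrite (bigD1 x) //= (bigD1 y) /=; last by rewrite eq_sym h1.
rewrite (bigD1 z) /=; last by rewrite eq_sym h2 eq_sym h4.
rewrite (bigD1 i) /=; last by rewrite eq_sym h3 eq_sym h5 eq_sym h6.
rewrite big_pred0 ?addr0 ?addrA // => k.
have := @cover4 x y z i k h1 h2 h3 h4 h5 h6.
by case: (k == x); case: (k == y); case: (k == z); case: (k == i).
Qed.

Lemma mkperm (a b c d : 'I_4) :
  a != b -> a != c -> a != d -> b != c -> b != d -> c != d ->
  exists s : 'S_4, [/\ s 0 = a, s 1 = b, s 2 = c & s 3 = d].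
Proof.
move=> h1 h2 h3 h4 h5 h6.
pose f := fun k : 'I_4 => nth a [:: a; b; c; d] k.
have finj : injective f.
  move=> k1 k2; rewrite /f.
  case: k1 => [[|[|[|[|//]]]] p1]; case: k2 => [[|[|[|[|//]]]] p2] //= e;
    try (by apply: val_inj);
    by move: h1 h2 h3 h4 h5 h6; rewrite e ?eqxx.
exists (perm finj); rewrite !permE; split => //.
Qed.
Lemma pos_neg {R : realFieldType} {w a : R} : 0 < w -> w * a < 0 -> a < 0.
Proof. by move=> w0; rewrite pmulr_rlt0. Qed.

Lemma core (R : realFieldType) (wx wy wz wi nx ny nz ni gxy gxz gxi gyz gyi gzi : R) :
  0 < wx -> 0 < wy -> 0 < wz -> 0 < wi ->
  wx*nx + wy*gxy + wz*gxz + wi*gxi = 0 ->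
  wx*gxy + wy*ny + wz*gyz + wi*gyi = 0 ->
  wx*gxz + wy*gyz + wz*nz + wi*gzi = 0 ->
  wx*gxi + wy*gyi + wz*gzi + wi*ni = 0 ->
  0 <= nx -> nx <= ny -> ny <= nz ->
  2 * gxy <= nx + ny -> 2 * gxz <= nx + nz -> 2 * gyz <= ny + nz ->
  gxi <= ni -> gyi <= ni -> gzi <= ni ->
  [\/ nx < gxy, nx < gxz | nx < gxi] ->
  [\/ ny < gxy, ny < gyz | ny < gyi] ->
  [\/ nz < gxz, nz < gyz | nz < gzi] ->
  (gxi - gyi - gxy + ny < 0 /\ gyz - gxy - gxz + nx < 0 /\ gxi - gxz - gzi + nz < 0) \/
  (gyi - gxi - gxy + nx < 0 /\ gxz - gxy - gyz + ny < 0 /\ gyi - gyz - gzi + nz < 0).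
Proof.
move=> px py pz pi R1 R2 R3 R4 n0 o1 o2 a1 a2 a3 e1 e2 e3 Hx Hy Hz.
have z3 : nz < gzi by case: Hz => h //; lra.
case: Hy => [y1|y2|y3]; first (exfalso; lra).
-
  right.
  have hxz : gxz < 0.
    apply: (pos_neg px); have : 0 < wy * gyz by apply: mulr_gt0 => //; lra.
    have : 0 <= wz * nz by apply: mulr_ge0; lra.
    have : 0 < wi * gzi by apply: mulr_gt0 => //; lra.
    lra.
  case: Hx => [x1|x2|x3]; last first.
  +
    have hyi : gyi < 0.
      apply: (pos_neg py); have : 0 < wx * gxi by apply: mulr_gt0 => //; lra.
      have : 0 <= wi * ni by apply: mulr_ge0; lra.
      have : 0 < wz * gzi by apply: mulr_gt0 => //; lra.
      lra.
    have h1 : gyi - gxy < 0.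
      apply: (pos_neg py).
      have : 0 < wx * (gxi - nx) by apply: mulr_gt0 => //; lra.
      have : 0 < wz * (gzi - gxz) by apply: mulr_gt0 => //; lra.
      have : 0 <= wi * (ni - gxi) by apply: mulr_ge0; lra.
      nra.
    have h2 : gxz - gxy < 0.
      apply: (pos_neg px).
      have : 0 < wy * (gyz - ny) by apply: mulr_gt0 => //; lra.
      have : 0 <= wz * (nz - gyz) by apply: mulr_ge0; lra.
      have : 0 < wi * (gzi - gyi) by apply: mulr_gt0 => //; lra.
      nra.
    split; [lra|split; lra].
  + exfalso; lra.
  +
    have hyi : gyi < 0.
      apply: (pos_neg pi); have : 0 < wz * gyz by apply: mulr_gt0 => //; lra.
      have : 0 <= wy * ny by apply: mulr_ge0; lra.
      have : 0 < wx * gxy by apply: mulr_gt0 => //; lra.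
      lra.
    have h : gyi - gxi < 0.
      apply: (pos_neg pi).
      have : 0 < wx * (gxy - nx) by apply: mulr_gt0 => //; lra.
      have : 0 <= wy * (ny - gxy) by apply: mulr_ge0; lra.
      have : 0 < wz * (gyz - gxz) by apply: mulr_gt0 => //; lra.
      nra.
    split; [lra|split; lra].
-
  left.
  have hxi : gxi < 0.
    apply: (pos_neg px); have : 0 < wy * gyi by apply: mulr_gt0 => //; lra.
    have : 0 <= wi * ni by apply: mulr_ge0; lra.
    have : 0 < wz * gzi by apply: mulr_gt0 => //; lra.
    lra.
  case: Hx => [x1|x2|x3]; last (exfalso; lra).
  +
    have hyz : gyz < 0.
      apply: (pos_neg pz); have : 0 < wy * gyi by apply: mulr_gt0 => //; lra.
      have : 0 <= wy * ny by apply: mulr_ge0; lra.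
      have : 0 < wx * gxy by apply: mulr_gt0 => //; lra.
      have : 0 < wi * gyi by apply: mulr_gt0 => //; lra.
      lra.
    have h1 : gyz - gxz < 0.
      apply: (pos_neg pz).
      have : 0 < wx * (gxy - nx) by apply: mulr_gt0 => //; lra.
      have : 0 <= wy * (ny - gxy) by apply: mulr_ge0; lra.
      have : 0 < wi * (gyi - gxi) by apply: mulr_gt0 => //; lra.
      nra.
    have h2 : gxi - gxz < 0.
      apply: (pos_neg px).
      have : 0 < wy * (gyi - gyz) by apply: mulr_gt0 => //; lra.
      have : 0 < wz * (gzi - nz) by apply: mulr_gt0 => //; lra.
      have : 0 <= wi * (ni - gzi) by apply: mulr_ge0; lra.
      nra.
    split; [lra|split; lra].
  +
    have hyz : gyz < 0.
      apply: (pos_neg py); have : 0 < wx * gxz by apply: mulr_gt0 => //; lra.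
      have : 0 <= wz * nz by apply: mulr_ge0; lra.
      have : 0 < wi * gzi by apply: mulr_gt0 => //; lra.
      lra.
    have h1 : gxi - gxy < 0.
      apply: (pos_neg px).
      have : 0 < wy * (gyi - ny) by apply: mulr_gt0 => //; lra.
      have : 0 < wz * (gzi - gyz) by apply: mulr_gt0 => //; lra.
      have : 0 <= wi * (ni - gyi) by apply: mulr_ge0; lra.
      nra.
    have h2 : gyz - gxy < 0.
      apply: (pos_neg py).
      have : 0 < wx * (gxz - nx) by apply: mulr_gt0 => //; lra.
      have : 0 <= wz * (nz - gxz) by apply: mulr_ge0; lra.
      have : 0 < wi * (gzi - gxi) by apply: mulr_gt0 => //; lra.
      nra.
    split; [lra|split; lra].
Qed.
Lemma aux_prod {R : realFieldType} {t K mu x : R} : 0 <= t -> t * K = mu / 8 -> x <= K ->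
  t * x <= mu / 8.
Proof. move=> t0 tK xK; rewrite -tK; exact: ler_wpM2l. Qed.

Lemma aux_fac {R : realFieldType} {t u : R} : 1 / 2 <= 1 - t - 2 * (t * t) -> u <= 0 ->
  (1 - t - 2 * (t * t)) * u <= u / 2.
Proof.
move=> h u0.
have : 0 <= (1 - t - 2 * (t * t) - 1 / 2) * (- u) by apply: mulr_ge0; lra.
lra.
Qed.

Lemma aux1 {R : realFieldType} {t K mu x y u : R} : 0 < t -> t * K = mu / 8 -> t <= 1 / 8 ->
  0 < mu -> x + y <= K -> u <= - mu -> 1 / 2 <= 1 - t - 2 * (t * t) ->
  t * t * x + (1 - t - 2 * (t * t)) * u + t * t * y < 0.
Proof.
move=> t0 tK t8 m0 hxy hu q.
have h1 := aux_prod (ltW t0) tK hxy.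
have h2 : t * (t * (x + y)) <= t * (mu / 8) by apply: ler_wpM2l; lra.
have h3 : t * (mu / 8) <= mu / 64 by nra.
have h5 : (1 - t - 2 * (t * t)) * u <= u / 2 by apply: aux_fac => //; lra.
have e : t * t * x + t * t * y = t * (t * (x + y)) by ring.
lra.
Qed.

Lemma aux2 {R : realFieldType} {t K mu x y u : R} : 0 < t -> t * K = mu / 8 ->
  0 < mu -> x + y <= K -> u <= - mu ->
  t * t * x + t * u + t * t * y < 0.
Proof.
move=> t0 tK m0 hxy hu.
have h1 := aux_prod (ltW t0) tK hxy.
have : t * (t * (x + y) + u) < 0 by rewrite pmulr_rlt0 //; lra.
have e : t * t * x + t * u + t * t * y = t * (t * (x + y) + u) by ring.
lra.
Qed.

Lemma aux3 {R : realFieldType} {t K mu x y u : R} : 0 < t -> t * K = mu / 8 -> t <= 1 / 8 ->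
  0 < mu -> x <= K -> y <= K -> u <= - mu -> 1 / 2 <= 1 - t - 2 * (t * t) ->
  t * t * x + t * y + (1 - t - 2 * (t * t)) * u < 0.
Proof.
move=> t0 tK t8 m0 hx hy hu q.
have h1 := aux_prod (ltW t0) tK hx.
have h1' := aux_prod (ltW t0) tK hy.
have h2 : t * (t * x) <= t * (mu / 8) by apply: ler_wpM2l; lra.
have h3 : t * (mu / 8) <= mu / 64 by nra.
have h5 : (1 - t - 2 * (t * t)) * u <= u / 2 by apply: aux_fac => //; lra.
have e : t * t * x = t * (t * x) by ring.
lra.
Qed.
Section Back.
Variable R : realType.
Local Notation pt := 'rV[R]_3.
Variable P : 'I_4 -> pt.

Lemma corner_eq (O : pt) a b c :
  dotp (P a - P b) (P c - P b) =
  dotp (P a - O) (P c - O) - dotp (P b - O) (P a - O) - dotp (P b - O) (P c - O)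
  + dotp (P b - O) (P b - O).
Proof.
have e k l : P k - P l = (P k - O) - (P l - O) by rewrite opprB addrA subrK.
rewrite (e a b) (e c b); move: (P a - O) (P b - O) (P c - O) => u v t.
rewrite !dotpBl !dotpBr (dotpC _ v u); lra.
Qed.

Lemma back_sorted (O : pt) (w : 'I_4 -> R) (x y z i : 'I_4) :
  (forall k, 0 < w k) -> \sum_(k < 4) w k = 1 -> O = \sum_(k < 4) w k *: P k ->
  (forall k, dotp (P k - P i) (P i - O) <= 0) ->
  (forall j, j != i -> exists k, 0 < dotp (P k - P j) (P j - O)) ->
  x != y -> x != z -> x != i -> y != z -> y != i -> z != i ->
  dotp (P x - O) (P x - O) <= dotp (P y - O) (P y - O) ->
  dotp (P y - O) (P y - O) <= dotp (P z - O) (P z - O) ->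
  has_obtuse_cycle P.
Proof.
move=> w0 w1 hO heq hne h1 h2 h3 h4 h5 h6 o1 o2.
pose G a b := dotp (P a - O) (P b - O).
have Gs a b : G a b = G b a by rewrite /G dotpC.
have e k l : P k - P l = (P k - O) - (P l - O) by rewrite opprB addrA subrK.
have hG k j : dotp (P k - P j) (P j - O) = G k j - G j j.
  by rewrite e dotpBl.
have row a : w x * G x a + w y * G y a + w z * G z a + w i * G i a = 0.
  have := @affine_dot _ P w O (P a - O) w1.
  rewrite -hO subrr dotp0l (@sum4 _ _ x y z i h1 h2 h3 h4 h5 h6) => ->.
  by [].
have am a b : 2 * G a b <= G a a + G b b by apply: dotp_amgm.
have ne j : j != i -> exists k, G j j < G j k.
  move=> /hne [k]; rewrite hG Gs subr_gt0 => hk; by exists k.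
have d3 j k1 k2 k3 : j != k1 -> j != k2 -> j != k3 -> k1 != k2 -> k1 != k3 -> k2 != k3 ->
    (exists k, G j j < G j k) -> [\/ G j j < G j k1, G j j < G j k2 | G j j < G j k3].
  move=> g1 g2 g3 g4 g5 g6 [k hk].
  have := @cover4 j k1 k2 k3 k g1 g2 g3 g4 g5 g6.
  case/or4P => /eqP ek; subst k; [by rewrite ltxx in hk|by constructor 1|by constructor 2|by constructor 3].
have nx := d3 _ _ _ _ h1 h2 h3 h4 h5 h6 (ne _ h3).
have h1' : y != x by rewrite eq_sym.
have h2' : z != x by rewrite eq_sym.
have h4' : z != y by rewrite eq_sym.
have h3' : i != x by rewrite eq_sym.
have h5' : i != y by rewrite eq_sym.
have h6' : i != z by rewrite eq_sym.
have K a b c : obtuse_angle (P a) (P b) (P c) <-> G a c - G b a - G b c + G b b < 0.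
  by rewrite /obtuse_angle (corner_eq O) /G.
have ny := d3 _ _ _ _ h1' h4 h5 h2 h3 h6 (ne _ h5).
have nz := d3 _ _ _ _ h2' h4' h6 h1 h3 h5 (ne _ h6).
have r1 := row x; rewrite (Gs y x) (Gs z x) (Gs i x) in r1.
have r2 := row y; rewrite (Gs z y) (Gs i y) in r2.
have r3 := row z; rewrite (Gs i z) in r3.
have r4 := row i.
have e1 : G x i <= G i i by have := heq x; rewrite hG; lra.
have e2 : G y i <= G i i by have := heq y; rewrite hG; lra.
have e3 : G z i <= G i i by have := heq z; rewrite hG; lra.
rewrite (Gs y x) in ny; rewrite (Gs z x) (Gs z y) in nz.
case: (@core R (w x) (w y) (w z) (w i) (G x x) (G y y) (G z z) (G i i)
   (G x y) (G x z) (G x i) (G y z) (G y i) (G z i) (w0 x) (w0 y) (w0 z) (w0 i)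
   r1 r2 r3 r4 (dotp_ge0 _ _) o1 o2 (am x y) (am x z) (am y z) e1 e2 e3 nx ny nz).
- move=> [c1 [c2 c3]].
  have [s [s0 s1 s2 s3]] := @mkperm i y x z h5' h3' h6' h1' h4 h2.
  exists s => /=; rewrite s0 s1 s2 s3; split; apply/K.
  + by have := Gs i x; have := Gs y x; lra.
  + by have := Gs y z; have := Gs x y; lra.
  + by have := Gs x i; have := Gs z x; lra.
- move=> [c1 [c2 c3]].
  have [s [s0 s1 s2 s3]] := @mkperm i x y z h3' h5' h6' h1 h2 h4.
  exists s => /=; rewrite s0 s1 s2 s3; split; apply/K.
  + by have := Gs i y; have := Gs x i; lra.
  + by have := Gs x z; have := Gs y x; lra.
  + by have := Gs y i; have := Gs z y; lra.
Qed.
End Back.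
Section Main.
Variable R : realType.
Local Notation pt := 'rV[R]_3.
Variable P : 'I_4 -> pt.

Lemma exists_eq (O : pt) : exists j, equilibrium_on P O j.
Proof.
pose n a := dotp (P a - O) (P a - O).
have [j _ hj] := @arg_maxP _ R _ (ord0 : 'I_4) xpredT n isT.
exists j; apply: (eq_of_vert _ P) => k.
have e : P k - P j = (P k - O) - (P j - O) by rewrite opprB addrA subrK.
rewrite e dotpBl.
have := dotp_amgm _ (P k - O) (P j - O).
have hk : n k <= n j := hj k isT.
move: hk; rewrite /n; lra.
Qed.

Lemma back_any (O : pt) (w : 'I_4 -> R) (x y z i : 'I_4) :
  (forall k, 0 < w k) -> \sum_(k < 4) w k = 1 -> O = \sum_(k < 4) w k *: P k ->
  (forall k, dotp (P k - P i) (P i - O) <= 0) ->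
  (forall j, j != i -> exists k, 0 < dotp (P k - P j) (P j - O)) ->
  x != y -> x != z -> x != i -> y != z -> y != i -> z != i ->
  has_obtuse_cycle P.
Proof.
move=> w0 w1 hO heq hne h1 h2 h3 h4 h5 h6.
have h1' : y != x by rewrite eq_sym.
have h2' : z != x by rewrite eq_sym.
have h4' : z != y by rewrite eq_sym.
pose n a := dotp (P a - O) (P a - O).
have B := @back_sorted R P O w.
case/orP: (le_total (n x) (n y)) => hxy; case/orP: (le_total (n x) (n z)) => hxz;
  case/orP: (le_total (n y) (n z)) => hyz.
- by apply: (B x y z i).
- by apply: (B x z y i).
- by apply: (B x y z i).
- by apply: (B z x y i).
- by apply: (B y x z i).
- by apply: (B y x z i).
- by apply: (B y z x i).
- by apply: (B z y x i).
Qed.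

Lemma others (i : 'I_4) : exists x y z : 'I_4,
  x != y /\ x != z /\ x != i /\ y != z /\ y != i /\ z != i.
Proof.
case: i => [[|[|[|[|//]]]] p].
- by exists (@Ordinal 4 1 isT), (@Ordinal 4 2 isT), (@Ordinal 4 3 isT).
- by exists (@Ordinal 4 0 isT), (@Ordinal 4 2 isT), (@Ordinal 4 3 isT).
- by exists (@Ordinal 4 0 isT), (@Ordinal 4 1 isT), (@Ordinal 4 3 isT).
- by exists (@Ordinal 4 0 isT), (@Ordinal 4 1 isT), (@Ordinal 4 2 isT).
Qed.

Lemma backward (O : pt) : interior (tetra P) O -> mono_unstable P O -> has_obtuse_cycle P.
Proof.
move=> hint [i [hi hu]].
have [w [w0 [w1 hO]]] := @interior_pos R P O hint.
have hT : tetra P O by exists w; split => [k|]; [exact: ltW|].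
have heq := vert_of_eq _ P hT hi.
have hne j : j != i -> exists k, 0 < dotp (P k - P j) (P j - O).
  move=> hj; apply: (noneq_vert _ P) => he; have := hu j he; move/eqP; by rewrite (negbTE hj).
have [x [y [z [h1 [h2 [h3 [h4 [h5 h6]]]]]]]] := others i.
exact: (@back_any O w x y z i).
Qed.
End Main.
Section Fwd.
Variable R : realType.
Local Notation pt := 'rV[R]_3.
Variable P : 'I_4 -> pt.

Lemma ptr_expand (w : 'I_4 -> R) (O : pt) j k :
  \sum_(m < 4) w m = 1 -> O = \sum_(m < 4) w m *: P m ->
  dotp (P k - P j) (P j - O) = - \sum_(m < 4) w m * dotp (P m - P j) (P k - P j).
Proof.
move=> w1 hO.
rewrite -(@affine_dot _ P w (P j) (P k - P j) w1) -hO dotpC.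
by rewrite -dotpNl opprB.
Qed.

Lemma forward : nondeg_tetra P -> has_obtuse_cycle P ->
  exists O : pt, interior (tetra P) O /\ mono_unstable P O.
Proof.
move=> nd [s] /= [hB hC hD].
set a := s 0 in hB hD; set b := s 1 in hB hC; set c := s 2 in hB hC hD; set d := s 3 in hC hD.
have dab : a != b by rewrite (inj_eq perm_inj).
have dac : a != c by rewrite (inj_eq perm_inj).
have dad : a != d by rewrite (inj_eq perm_inj).
have dbc : b != c by rewrite (inj_eq perm_inj).
have dbd : b != d by rewrite (inj_eq perm_inj).
have dcd : c != d by rewrite (inj_eq perm_inj).
have dba : b != a by rewrite eq_sym.
have dca : c != a by rewrite eq_sym.
have dda : d != a by rewrite eq_sym.
have dcb : c != b by rewrite eq_sym.
have ddb : d != b by rewrite eq_sym.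
have ddc : d != c by rewrite eq_sym.
move: hB hC hD; rewrite /obtuse_angle.
set be := dotp (P a - P b) (P c - P b).
set ga := dotp (P b - P c) (P d - P c).
set de := dotp (P c - P d) (P a - P d) => hB hC hD.
set a1 := dotp (P a - P b) (P a - P b).
set a3 := dotp (P d - P b) (P a - P b).
set c1 := dotp (P a - P c) (P d - P c).
set c4 := dotp (P d - P c) (P d - P c).
set d1 := dotp (P a - P d) (P a - P d).
set d2 := dotp (P b - P d) (P a - P d).
pose mu := Num.min (- be) (Num.min (- ga) (- de)).
have [mb [mg md]] : mu <= - be /\ mu <= - ga /\ mu <= - de.
  have := lexx mu; rewrite {2}/mu !le_min => /andP [-> /andP [-> ->]]; done.
have mu0 : 0 < mu by rewrite /mu !lt_min !oppr_gt0 hB hC hD.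
pose K := 1 + mu + `|a1| + `|a3| + `|c1| + `|c4| + `|d1| + `|d2|.
have hK : 1 + mu <= K.
  rewrite /K; have := normr_ge0 a1; have := normr_ge0 a3; have := normr_ge0 c1;
  have := normr_ge0 c4; have := normr_ge0 d1; have := normr_ge0 d2; lra.
pose t := mu / (8 * K).
have tK : t * K = mu / 8.
  rewrite /t; field; apply: lt0r_neq0; lra.
have t0 : 0 < t by apply: divr_gt0 => //; lra.
have t8 : t <= 1 / 8.
  have : t * K <= 1 / 8 * K by rewrite tK; nra.
  by rewrite ler_pM2r //; lra.
have q : 1 / 2 <= 1 - t - 2 * (t * t) by nra.
pose w k := if k == a then t * t else if k == b then t
            else if k == c then 1 - t - 2 * (t * t) else t * t.
have wa : w a = t * t by rewrite /w eqxx.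
have wb : w b = t by rewrite /w (negbTE dba) eqxx.
have wc : w c = 1 - t - 2 * (t * t) by rewrite /w (negbTE dca) (negbTE dcb) eqxx.
have wd : w d = t * t by rewrite /w (negbTE dda) (negbTE ddb) (negbTE ddc).
have S4 (F : 'I_4 -> R) : \sum_k F k = F a + F b + F c + F d.
  exact: (@sum4 _ F a b c d dab dac dad dbc dbd dcd).
have w0 k : 0 < w k.
  rewrite /w; case: ifP => _; first by apply: mulr_gt0.
  case: ifP => _ //; case: ifP => _; [lra| by apply: mulr_gt0].
have w1 : \sum_k w k = 1 by rewrite S4 wa wb wc wd; lra.
pose O := \sum_(k < 4) w k *: P k.
have hO : O = \sum_(k < 4) w k *: P k by [].
have hT : tetra P O by exists w; split => [k|]; [exact: ltW|].
have hint : interior (tetra P) O by apply: pos_interior.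
have z0 j : dotp (P j - P j) (P a - P j) = 0 by rewrite subrr dotp0l.
have nB : ~ equilibrium_on P O b.
  apply: (noneq_of _ P (k := a) hT).
  rewrite (@ptr_expand w O b a w1 hO) S4 wa wb wc wd subrr dotp0l -/a1 -/a3.
  rewrite (dotpC _ (P c - P b)) -/be mulr0 addr0 oppr_gt0.
  apply: (aux1 t0 tK t8 mu0 _ _ q); last by lra.
  rewrite /K; have := ler_norm a1; have := ler_norm a3; have := normr_ge0 c1;
  have := normr_ge0 c4; have := normr_ge0 d1; have := normr_ge0 d2; lra.
have nC : ~ equilibrium_on P O c.
  apply: (noneq_of _ P (k := d) hT).
  rewrite (@ptr_expand w O c d w1 hO) S4 wa wb wc wd subrr dotp0l -/c1 -/c4 -/ga.
  rewrite mulr0 addr0 oppr_gt0.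
  apply: (aux2 t0 tK mu0 _); last by lra.
  rewrite /K; have := normr_ge0 a1; have := normr_ge0 a3; have := ler_norm c1;
  have := ler_norm c4; have := normr_ge0 d1; have := normr_ge0 d2; lra.
have nD : ~ equilibrium_on P O d.
  apply: (noneq_of _ P (k := a) hT).
  rewrite (@ptr_expand w O d a w1 hO) S4 wa wb wc wd subrr dotp0l -/d1 -/d2 -/de.
  rewrite mulr0 addr0 oppr_gt0.
  have hKa : `|a1| + `|a3| + `|c1| + `|c4| + `|d1| + `|d2| <= K by rewrite /K; lra.
  apply: (aux3 t0 tK t8 mu0 _ _ _ q); last by lra.
    have := ler_norm d1; have := normr_ge0 a1; have := normr_ge0 a3; have := normr_ge0 c1;
    have := normr_ge0 c4; have := normr_ge0 d2; lra.
  have := ler_norm d2; have := normr_ge0 a1; have := normr_ge0 a3; have := normr_ge0 c1;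
  have := normr_ge0 c4; have := normr_ge0 d1; lra.
have onlya j : equilibrium_on P O j -> j = a.
  move=> hj; have := @cover4 a b c d j dab dac dad dbc dbd dcd.
  case/or4P => /eqP // ej; subst j; by [case: nB|case: nC|case: nD].
have [e he] := @exists_eq R P O.
exists O; split => //; exists a; split; last exact: onlya.
by rewrite -(onlya e he).
Qed.
End Fwd.

Theorem theorem1p10 (R : realType) (P : 'I_4 -> 'rV[R]_3) :
  nondeg_tetra P ->
  (has_obtuse_cycle P <->
   exists O : 'rV[R]_3, (interior (tetra P)) O /\ mono_unstable P O).
Proof.
move=> nd; split; first exact: forward.
by move=> [X [hi hm]]; exact: (@backward R P X hi hm).
Qed.
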